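(* Let $f:\mathbb{R}^n\to\mathbb{R}$ be continuously differentiable and bounded below, let $x,d\in\mathbb{R}^n$ with $\langle g,d\rangle<0$ where $g=\nabla f(x)$, and let $0<2\rho<\sigma<1$, $\eta=\frac{\sigma}{2(\sigma-\rho)}$. Say that $\alpha>0$ satisfies (W1) if $f(x+\alpha d)\le f(x)+\rho\alpha\langle g,d\rangle$, and satisfies (W2) if $\langle\nabla f(x+\alpha d),d\rangle\ge\sigma\langle g,d\rangle$. Set $\alpha_0'=0$ and let $\alpha_0''>0$ be any number at which (W1) fails (such a number exists). For $\ell=0,1,2,\dots$, with $x_\ell'=x+\alpha_\ell' d$, $x_\ell''=x+\alpha_\ell'' d$, define $$c_\ell=\alpha_\ell'+\frac{\alpha_\ell''-\alpha_\ell'}{2}\cdot\frac{-(\alpha_\ell''-\alpha_\ell')\langle\nabla f(x_\ell'),d\rangle}{f(x_\ell'')-f(x_\ell')-(\alpha_\ell''-\alpha_\ell')\langle\nabla f(x_\ell'),d\rangle},\qquad \tilde c_\ell=\max\{c_\ell,\ \eta\alpha_\ell'+(1-\eta)\alpha_\ell''\}.$$ If $\tilde c_\ell$ satisfies both (W1) and (W2), stop and output $\alpha=\tilde c_\ell$. Otherwise set $[\alpha_{\ell+1}',\alpha_{\ell+1}'']=[\alpha_\ell',\tilde c_\ell]$ if $\tilde c_\ell$ does not satisfy (W1), and $[\alpha_{\ell+1}',\alpha_{\ell+1}'']=[\tilde c_\ell,\alpha_\ell'']$ otherwise. Then this procedure is well defined and stops after finitely many iterations, i.e. there is a finite $\ell^*$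 such that $\alpha=\tilde c_{\ell^*}$ satisfies (W1) and (W2).
   Context: $\langle\cdot,\cdot\rangle$ is the Euclidean inner product on $\mathbb{R}^n$. (W1)–(W2) are the standard (weak) Wolfe–Powell conditions for the step $\alpha$ along $d$ at $x$. *)

(* Defs.v *)
From HB Require Import structures.
From mathcomp Require Import all_boot all_order all_algebra.
From mathcomp Require Import all_classical all_reals all_analysis.
Set Implicit Arguments. Unset Strict Implicit. Unset Printing Implicit Defensive.
Import Order.TTheory GRing.Theory Num.Theory.
Import numFieldNormedType.Exports.
Local Open Scope ring_scope.

Definition inner (R : realType) (n : nat) (u v : 'rV[R]_n) : R :=
  \sum_(i < n) u ord0 i * v ord0 i.

Definition grad (R : realType) (n : nat) (f : 'rV[R]_n -> R) (y : 'rV[R]_n)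
  : 'rV[R]_n := \row_(i < n) ('d f y (delta_mx ord0 i : 'rV[R]_n)).

Definition C1 (R : realType) (n : nat) (f : 'rV[R]_n -> R) : Prop :=
  (forall y, differentiable f y) /\ continuous (grad f).

Definition bounded_below (R : realType) (n : nat) (f : 'rV[R]_n -> R) : Prop :=
  exists m : R, forall y, m <= f y.

(* Wolfe conditions for the step alpha along d at x (positivity of alpha is
   stated separately). *)
Definition W1 (R : realType) (n : nat) (f : 'rV[R]_n -> R) (x d : 'rV[R]_n)
  (rho alpha : R) : Prop :=
  f (x + alpha *: d) <= f x + rho * alpha * inner (grad f x) d.

Definition W2 (R : realType) (n : nat) (f : 'rV[R]_n -> R) (x d : 'rV[R]_n)
  (sigma alpha : R) : Prop :=
  inner (grad f (x + alpha *: d)) d >= sigma * inner (grad f x) d.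

Definition cdenom (R : realType) (n : nat) (f : 'rV[R]_n -> R) (x d : 'rV[R]_n)
  (a1 a2 : R) : R :=
  f (x + a2 *: d) - f (x + a1 *: d)
    - (a2 - a1) * inner (grad f (x + a1 *: d)) d.

Definition c_of (R : realType) (n : nat) (f : 'rV[R]_n -> R) (x d : 'rV[R]_n)
  (a1 a2 : R) : R :=
  a1 + (a2 - a1) / 2 *
        ((- ((a2 - a1) * inner (grad f (x + a1 *: d)) d)) / cdenom f x d a1 a2).

Definition ctilde_of (R : realType) (n : nat) (f : 'rV[R]_n -> R) (x d : 'rV[R]_n)
  (eta a1 a2 : R) : R :=
  Num.max (c_of f x d a1 a2) (eta * a1 + (1 - eta) * a2).

(* The bracket [alpha'_l, alpha''_l] of the procedure.  The update rule is
   applied unconditionally; the procedure's stopping index is characterised in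
   the theorem statement. *)
Fixpoint bracket (R : realType) (n : nat) (f : 'rV[R]_n -> R) (x d : 'rV[R]_n)
  (rho eta a0 : R) (l : nat) : R * R :=
  match l with
  | O => (0, a0)
  | S k =>
    let: (a1, a2) := bracket f x d rho eta a0 k in
    let ct := ctilde_of f x d eta a1 a2 in
    if asbool (W1 f x d rho ct) then (ct, a2) else (a1, ct)
  end.

Definition ctilde_seq (R : realType) (n : nat) (f : 'rV[R]_n -> R) (x d : 'rV[R]_n)
  (rho eta a0 : R) (l : nat) : R :=
  ctilde_of f x d eta (bracket f x d rho eta a0 l).1 (bracket f x d rho eta a0 l).2.

Definition denom_seq (R : realType) (n : nat) (f : 'rV[R]_n -> R) (x d : 'rV[R]_n)
  (rho eta a0 : R) (l : nat) : R :=
  cdenom f x d (bracket f x d rho eta a0 l).1 (bracket f x d rho eta a0 l).2.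

(* Main.v *)
Require Import Defs.
From HB Require Import structures.
From mathcomp Require Import all_boot all_order all_algebra.
From mathcomp Require Import all_classical all_reals all_analysis.
From mathcomp Require Import ring lra.
Import Order.TTheory GRing.Theory Num.Theory.
Import numFieldNormedType.Exports.
Local Open Scope ring_scope.
Set Implicit Arguments. Unset Strict Implicit.

Lemma inner_cont (R : realType) (n : nat) (d : 'rV[R]_n) :
  continuous (fun u : 'rV[R]_n => inner u d).
Proof.
rewrite /inner.
apply: (@continuous_big _ _ +%R 0 xpredT); first exact: add_continuous.
move=> j _ u0.
apply: (@continuousM _ _ (fun u : 'rV[R]_n => u ord0 j) (fun _ => d ord0 j) u0).
  exact: coord_continuous.
exact: cst_continuous.
Qed.

Lemma grad_diff (R : realType) (n : nat) (f : 'rV[R]_n -> R) y (d : 'rV[R]_n) :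
  'd f y d = inner (grad f y) d.
Proof.
rewrite /inner {1}(row_sum_delta d) linear_sum /=.
apply: eq_bigr => i _; rewrite linearZ /= mxE mulrC.
by [].
Qed.

Lemma phi_derive (R : realType) (n : nat) (f : 'rV[R]_n -> R) (x d : 'rV[R]_n) (a : R) :
  (forall y, differentiable f y) ->
  is_derive a (1:R) (fun t : R => f (x + t *: d)) (inner (grad f (x + a *: d)) d).
Proof.
move=> df.
have E : (fun h : R => h^-1 *: (((fun t : R => f (x + t *: d)) \o shift a) (h *: 1) - f (x + a *: d)))
   = (fun h : R => h^-1 *: ((f \o shift (x + a *: d)) (h *: d) - f (x + a *: d))).
  apply/funext => h /=; congr (_ *: (f _ - _)).
  by rewrite [h *: 1]mulr1 scalerDl addrCA addrA.
have Hd : derivable (fun t : R => f (x + t *: d)) a 1.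
  by rewrite /derivable E; exact: diff_derivable.
split => //.
rewrite /derive E -grad_diff -deriveE //.
Qed.

Lemma dphi_cont (R : realType) (n : nat) (f : 'rV[R]_n -> R) (x d : 'rV[R]_n) :
  continuous (grad f) ->
  continuous (fun a : R => inner (grad f (x + a *: d)) d).
Proof.
move=> gc a.
have h1 : {for a, continuous (fun t : R => x + t *: d)}.
  apply: continuousD; first exact: cst_continuous.
  exact: scalel_continuous.
have := continuous_comp (continuous_comp h1 (gc _)) (@inner_cont _ _ d _).
exact.
Qed.

Lemma key_bound (R : realType) (a1 a2 p1 p2 q f0 g rho sigma : R) :
  a1 < a2 -> p1 <= f0 + rho * a1 * g -> f0 + rho * a2 * g < p2 ->
  q < sigma * g -> g < 0 -> 0 < 2 * rho -> 2 * rho < sigma -> sigma < 1 ->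
  let D := p2 - p1 - (a2 - a1) * q in
  0 < D /\
  a1 + (a2 - a1) / 2 * ((- ((a2 - a1) * q)) / D) <
     a1 + sigma / (2 * (sigma - rho)) * (a2 - a1).
Proof.
move=> h12 hp1 hp2 hq hg hr hrs hs D.
have hD1 : rho * g * (a2 - a1) < p2 - p1 by lra.
have hsg : sigma * g < rho * g by nra.
have hDpos : 0 < D.
  rewrite /D; nra.
split => //.
have h1 : 0 < sigma * (p2 - p1 - rho * g * (a2 - a1)).
  apply: mulr_gt0; lra.
have h2 : 0 < (a2 - a1) * rho * (sigma * g - q).
  apply: mulr_gt0; [apply: mulr_gt0|]; lra.
rewrite -subr_gt0.
have hDn : D != 0 by rewrite gt_eqF.
have hsr : sigma - rho != 0 by apply/eqP; lra.
have -> : a1 + sigma / (2 * (sigma - rho)) * (a2 - a1) -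
   (a1 + (a2 - a1) / 2 * (- ((a2 - a1) * q) / D)) =
   (a2 - a1) * (sigma * (p2 - p1) - rho * (a2 - a1) * q) / (2 * (sigma - rho) * D).
  rewrite /D in hDn *; field; rewrite ?hDn ?hsr //.
apply: divr_gt0.
  apply: mulr_gt0; lra.
apply: mulr_gt0 => //; lra.
Qed.

Lemma eta_bounds (R : realType) (rho sigma eta : R) :
  0 < 2 * rho -> 2 * rho < sigma -> eta = sigma / (2 * (sigma - rho)) ->
  1 / 2 <= eta /\ eta < 1.
Proof.
move=> hr hrs ->.
have hsr : sigma - rho != 0 by apply/eqP; lra.
have hsr' : 0 < sigma - rho by lra.
split.
  rewrite -subr_ge0.
  have -> : sigma / (2 * (sigma - rho)) - 1 / 2 = rho / (2 * (sigma - rho)).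
    by field; rewrite hsr.
  apply: divr_ge0; lra.
rewrite -subr_gt0.
have -> : 1 - sigma / (2 * (sigma - rho)) = (sigma - 2 * rho) / (2 * (sigma - rho)).
  by field; rewrite hsr.
apply: divr_gt0; lra.
Qed.

Definition Inv (R : realType) (n : nat) (f : 'rV[R]_n -> R) (x d : 'rV[R]_n)
  (rho sigma a1 a2 : R) : Prop :=
  [/\ 0 <= a1, a1 < a2, W1 f x d rho a1,
      inner (grad f (x + a1 *: d)) d < sigma * inner (grad f x) d
    & ~ W1 f x d rho a2].
Arguments Inv {R n}.

Lemma step_bounds (R : realType) (n : nat) (f : 'rV[R]_n -> R) (x d : 'rV[R]_n)
  (rho sigma eta a1 a2 : R) :
  inner (grad f x) d < 0 -> 0 < 2 * rho -> 2 * rho < sigma -> sigma < 1 ->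
  eta = sigma / (2 * (sigma - rho)) ->
  Inv f x d rho sigma a1 a2 ->
  0 < cdenom f x d a1 a2 /\
  a1 + (1 - eta) * (a2 - a1) <= ctilde_of f x d eta a1 a2 /\
  ctilde_of f x d eta a1 a2 <= a1 + eta * (a2 - a1).
Proof.
move=> hg hr hrs hs heta [h0 h12 hw1 hd hw2].
have hp2 : f x + rho * a2 * inner (grad f x) d < f (x + a2 *: d).
  by rewrite ltNge; apply/negP.
rewrite /W1 in hw1.
have [hD hc] := key_bound h12 hw1 hp2 hd hg hr hrs hs.
have [he1 he2] := eta_bounds hr hrs heta.
split; first exact: hD.
rewrite /ctilde_of; split.
  rewrite le_max; apply/orP; right; rewrite le_eqVlt; apply/orP; left; apply/eqP; ring.
rewrite ge_max; apply/andP; split.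
  rewrite -heta in hc; exact: ltW hc.
rewrite -subr_ge0.
have -> : a1 + eta * (a2 - a1) - (eta * a1 + (1 - eta) * a2) = (2 * eta - 1) * (a2 - a1) by ring.
apply: mulr_ge0.
  clear - he1; lra.
clear - h12; lra.
Qed.

Definition nextb (R : realType) (n : nat) (f : 'rV[R]_n -> R) (x d : 'rV[R]_n)
  (rho eta : R) (p : R * R) : R * R :=
  let: (a1, a2) := p in
  let ct := ctilde_of f x d eta a1 a2 in
  if asbool (W1 f x d rho ct) then (ct, a2) else (a1, ct).

Lemma bracketS (R : realType) (n : nat) (f : 'rV[R]_n -> R) (x d : 'rV[R]_n)
  (rho eta a0 : R) k :
  bracket f x d rho eta a0 k.+1 = nextb f x d rho eta (bracket f x d rho eta a0 k).
Proof. by []. Qed.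

Lemma next_ok (R : realType) (n : nat) (f : 'rV[R]_n -> R) (x d : 'rV[R]_n)
  (rho sigma eta a1 a2 : R) :
  inner (grad f x) d < 0 -> 0 < 2 * rho -> 2 * rho < sigma -> sigma < 1 ->
  eta = sigma / (2 * (sigma - rho)) ->
  Inv f x d rho sigma a1 a2 ->
  ~ (W1 f x d rho (ctilde_of f x d eta a1 a2) /\ W2 f x d sigma (ctilde_of f x d eta a1 a2)) ->
  let p := nextb f x d rho eta (a1, a2) in
  [/\ Inv f x d rho sigma p.1 p.2, a1 <= p.1, p.2 <= a2 & p.2 - p.1 <= eta * (a2 - a1)].
Proof.
move=> hg hr hrs hs heta hI hns p.
have [hD [hl hu]] := step_bounds hg hr hrs hs heta hI.
have [he1 he2] := eta_bounds hr hrs heta.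
case: hI => h0 h12 hw1 hd hw2.
have hpos : 0 < (1 - eta) * (a2 - a1) by apply: mulr_gt0; [clear - he2|clear - h12]; lra.
have hlt : eta * (a2 - a1) < a2 - a1.
  rewrite -subr_gt0.
  have -> : a2 - a1 - eta * (a2 - a1) = (1 - eta) * (a2 - a1) by ring.
  exact: hpos.
rewrite /p /nextb /=.
set ct := ctilde_of f x d eta a1 a2 in hl hu hns *.
have hct0 : 0 <= ct by clear - h0 hl hpos; lra.
have hct2 : ct < a2 by clear - hu hlt; lra.
have hct1 : a1 < ct by clear - hl hpos; lra.
have hL1 : a2 - ct <= eta * (a2 - a1).
  have : (1 - eta) * (a2 - a1) = (a2 - a1) - eta * (a2 - a1) by ring.
  clear - hl; lra.
have hL2 : ct - a1 <= eta * (a2 - a1) by clear - hu; lra.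
have h12' := ltW h12.
case: (asboolP (W1 f x d rho ct)) => hW /=.
- have hW2 : ~ W2 f x d sigma ct by move=> h2; apply: hns.
  split; [split| exact: ltW hct1 | exact: lexx | exact: hL1].
  + exact: hct0.
  + exact: hct2.
  + exact: hW.
  + rewrite ltNge; apply/negP => h; apply: hW2; exact: h.
  + exact: hw2.
- split; [split| exact: lexx | exact: ltW hct2 | exact: hL2].
  + exact: h0.
  + exact: hct1.
  + exact: hw1.
  + exact: hd.
  + exact: hW.
Qed.

Lemma inv_all (R : realType) (n : nat) (f : 'rV[R]_n -> R) (x d : 'rV[R]_n)
  (rho sigma eta a0 : R) :
  inner (grad f x) d < 0 -> 0 < 2 * rho -> 2 * rho < sigma -> sigma < 1 ->
  eta = sigma / (2 * (sigma - rho)) ->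
  0 < a0 -> ~ W1 f x d rho a0 ->
  forall k, (forall j, (j < k)%N -> ~ (W1 f x d rho (ctilde_seq f x d rho eta a0 j) /\
                                  W2 f x d sigma (ctilde_seq f x d rho eta a0 j))) ->
  Inv f x d rho sigma (bracket f x d rho eta a0 k).1 (bracket f x d rho eta a0 k).2 /\
  (bracket f x d rho eta a0 k).2 - (bracket f x d rho eta a0 k).1 <= eta ^+ k * a0.
Proof.
move=> hg hr hrs hs heta ha0 hna0.
have [he1 he2] := eta_bounds hr hrs heta.
elim => [|k IH] hst.
  rewrite /= expr0 mul1r subr0; split; last exact: lexx.
  split.
  - exact: lexx.
  - exact: ha0.
  - by rewrite /W1 scale0r addr0 mulr0 mul0r addr0.
  - rewrite scale0r addr0; clear - hg hs; nra.
  - exact: hna0.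
have [Ik Lk] := IH (fun j hj => hst j (ltnW hj)).
have hnk := hst k (ltnSn k).
rewrite /ctilde_seq in hnk.
rewrite bracketS.
move: Ik Lk hnk; case: (bracket f x d rho eta a0 k) => a1 a2 /= Ik Lk hnk.
have [I' h1 h2 L'] := next_ok hg hr hrs hs heta Ik hnk.
split; first exact: I'.
rewrite exprS -mulrA.
apply: (le_trans L'); apply: ler_wpM2l => //; clear - he1; lra.
Qed.

Lemma mono_step (R : realType) (n : nat) (f : 'rV[R]_n -> R) (x d : 'rV[R]_n)
  (rho sigma eta a0 : R) :
  inner (grad f x) d < 0 -> 0 < 2 * rho -> 2 * rho < sigma -> sigma < 1 ->
  eta = sigma / (2 * (sigma - rho)) ->
  0 < a0 -> ~ W1 f x d rho a0 ->
  forall k, (forall j, (j <= k)%N -> ~ (W1 f x d rho (ctilde_seq f x d rho eta a0 j) /\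
                                  W2 f x d sigma (ctilde_seq f x d rho eta a0 j))) ->
  (bracket f x d rho eta a0 k).1 <= (bracket f x d rho eta a0 k.+1).1 /\
  (bracket f x d rho eta a0 k.+1).2 <= (bracket f x d rho eta a0 k).2.
Proof.
move=> hg hr hrs hs heta ha0 hna0 k hst.
have [Ik _] := inv_all hg hr hrs hs heta ha0 hna0 (fun j hj => hst j (ltnW hj)).
have hnk := hst k (leqnn k).
rewrite /ctilde_seq in hnk.
rewrite bracketS.
move: Ik hnk; case: (bracket f x d rho eta a0 k) => a1 a2 /= Ik hnk.
have [I' h1 h2 L'] := next_ok hg hr hrs hs heta Ik hnk.
split; [exact: h1 | exact: h2].
Qed.

Lemma mvt_part (R : realType) (n : nat) (f : 'rV[R]_n -> R) (x d : 'rV[R]_n)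
  (rho sigma a1 a2 : R) :
  (forall y, differentiable f y) ->
  Inv f x d rho sigma a1 a2 ->
  exists2 xi, a1 <= xi <= a2 & rho * inner (grad f x) d < inner (grad f (x + xi *: d)) d.
Proof.
move=> hdf [h0 h12 hw1 hd hw2].
have hp2 : f x + rho * a2 * inner (grad f x) d < f (x + a2 *: d).
  by rewrite ltNge; apply/negP.
rewrite /W1 in hw1.
have hder : forall t, t \in `]a1, a2[%R ->
   is_derive t (1:R) (fun t : R => f (x + t *: d)) (inner (grad f (x + t *: d)) d).
  by move=> t _; exact: phi_derive.
have hc : {in `[a1, a2]%R, forall t, derivable (fun t : R => f (x + t *: d)) t 1}.
  move=> t _.
  by have [] := phi_derive x d t hdf.
have [c hcin hE] := MVT h12 hder (derivable_within_continuous hc).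
exists c.
  by move: hcin; rewrite in_itv /= => /andP[h1 h2]; rewrite !ltW.
have hD : 0 < a2 - a1 by clear - h12; lra.
rewrite -(ltr_pM2r hD) -hE.
clear - hw1 hp2; lra.
Qed.

Lemma final_contra (R : realType) (a1 a2 : nat -> R) (dphi : R -> R)
  (eta a0 lo hi : R) :
  (forall k, a1 k < a2 k) -> (forall k, a1 k <= a1 k.+1) -> (forall k, a2 k.+1 <= a2 k) ->
  (forall k, a2 k - a1 k <= eta ^+ k * a0) -> 0 <= eta -> eta < 1 -> 0 < a0 ->
  (forall k, dphi (a1 k) < lo) ->
  (forall k, exists2 xi, a1 k <= xi <= a2 k & hi < dphi xi) ->
  continuous dphi -> lo < hi -> False.
Proof.
move=> h12 m1 m2 hlen he0 he1 ha0 hlo hhi hc hlh.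
have m1' : forall k i, a1 k <= a1 (k + i)%N.
  move=> k; elim => [|i IH]; first by rewrite addn0.
  by rewrite addnS; apply: (le_trans IH).
have m2' : forall k i, a2 (k + i)%N <= a2 k.
  move=> k; elim => [|i IH]; first by rewrite addn0.
  by rewrite addnS; apply: (le_trans _ IH).
have h12' : forall k m, a1 k <= a2 m.
  move=> k m; apply: (le_trans (m1' k m)); apply: ltW; apply: (lt_le_trans (h12 _)).
  by rewrite addnC; exact: m2'.
pose S := range a1.
have hS0 : (S !=set0)%classic by exists (a1 0%N); exists 0%N.
have hSub : forall m, ubound S (a2 m) by move=> m y [k _ <-]; exact: h12'.
have hsup : has_sup S by split => //; exists (a2 0%N); exact: hSub.
set s := sup S.
have hs1 : forall k, a1 k <= s by move=> k; apply: sup_upper_bound => //; exists k.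
have hs2 : forall m, s <= a2 m by move=> m; apply: ge_sup => //; exact: hSub.
have heps : 0 < (hi - lo) / 2 by apply: divr_gt0; lra.
have := hc s; move/cvgrPdist_lt => /(_ _ heps) /nbhs_ballP [del hdel hball].
have : `|eta| < 1 by rewrite ger0_norm.
move/cvg_expr/cvgrPdist_lt => /(_ (del / a0)) [].
  by apply: divr_gt0.
move=> N _ HN.
have := HN N (leqnn N).
rewrite sub0r normrN ger0_norm ?exprn_ge0 // ltr_pdivlMr // => hN.
have [xi /andP[hx1 hx2] hxi] := hhi N.
have hlN := hlen N.
have hsN1 := hs1 N.
have hsN2 := hs2 N.
have b1 : `|dphi s - dphi (a1 N)| < (hi - lo) / 2.
  apply: hball; rewrite -ball_normE /= ltr_distlC; apply/andP; split.
    clear - hN hlN hsN1 hsN2; lra.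
  clear - hN hlN hsN1 hsN2; lra.
have b2 : `|dphi s - dphi xi| < (hi - lo) / 2.
  apply: hball; rewrite -ball_normE /= ltr_distlC; apply/andP; split.
    clear - hN hlN hsN1 hsN2 hx1 hx2; lra.
  clear - hN hlN hsN1 hsN2 hx1 hx2; lra.
have hloN := hlo N.
move: b1 b2; rewrite !ltr_distlC => /andP[b1 b1'] /andP[b2 b2'].
clear - b1 b1' b2 b2' hloN hxi hlh; lra.
Qed.

Unset Implicit Arguments.
Set Strict Implicit.

Theorem lemma2 (R : realType) (n : nat) (f : 'rV[R]_n -> R) (x d : 'rV[R]_n)
  (rho sigma : R) :
  C1 f -> bounded_below f ->
  inner (grad f x) d < 0 ->
  0 < 2 * rho -> 2 * rho < sigma -> sigma < 1 ->
  let eta := sigma / (2 * (sigma - rho)) in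
  (exists a : R, 0 < a /\ ~ W1 f x d rho a) /\
  (forall a0 : R, 0 < a0 -> ~ W1 f x d rho a0 ->
   exists l : nat,
     (forall k : nat, (k <= l)%N -> denom_seq f x d rho eta a0 k != 0) /\
     (forall k : nat, (k < l)%N ->
        ~ (W1 f x d rho (ctilde_seq f x d rho eta a0 k) /\
           W2 f x d sigma (ctilde_seq f x d rho eta a0 k))) /\
     0 < ctilde_seq f x d rho eta a0 l /\
     W1 f x d rho (ctilde_seq f x d rho eta a0 l) /\
     W2 f x d sigma (ctilde_seq f x d rho eta a0 l)).
Proof.
move=> [hdf hgc] [m hm] hg hr hrs hs eta.
have heta : eta = sigma / (2 * (sigma - rho)) by [].
have [he1 he2] := eta_bounds hr hrs heta.
split.
  set g := inner (grad f x) d in hg *.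
  have hK : 0 < - (rho * g) by clear - hg hr; nra.
  set a := Num.max 1 ((f x - m + 1) / (- (rho * g))).
  exists a; split.
    by rewrite /a lt_max ltr01.
  rewrite /W1 -/g => hw.
  have ha : (f x - m + 1) / (- (rho * g)) <= a by rewrite /a le_max lexx orbT.
  rewrite ler_pdivrMr // in ha.
  have hma := hm (x + a *: d).
  clear - ha hw hma; lra.
move=> a0 ha0 hna0.
pose stop k := W1 f x d rho (ctilde_seq f x d rho eta a0 k) /\
               W2 f x d sigma (ctilde_seq f x d rho eta a0 k).
case: (pselect (exists k, stop k)) => [[k0 hk0] | hnone].
  have ex : exists k, `[< stop k >] by exists k0; apply/asboolP.
  case: (ex_minnP ex) => l /asboolP hl hmin.
  have nst : forall j, (j < l)%N -> ~ stop j.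
    move=> j hj hsj; have := hmin j (asboolT hsj); by rewrite leqNgt hj.
  exists l; split.
    move=> k hk.
    have [Ik _] := inv_all hg hr hrs hs heta ha0 hna0 (fun j hj => nst j (leq_trans hj hk)).
    have [hD _] := step_bounds hg hr hrs hs heta Ik.
    by rewrite /denom_seq gt_eqF.
  split; first exact: nst.
  have [Il _] := inv_all hg hr hrs hs heta ha0 hna0 nst.
  have [_ [hlb _]] := step_bounds hg hr hrs hs heta Il.
  case: Il => h0 h12 _ _ _.
  have hpos : 0 < (1 - eta) * ((bracket f x d rho eta a0 l).2 - (bracket f x d rho eta a0 l).1).
    by apply: mulr_gt0; [clear - he2 | clear - h12]; lra.
  split; last exact: hl.
  rewrite /ctilde_seq; clear - hlb hpos h0; lra.
exfalso.
have hns : forall k, ~ stop k by move=> k hk; apply: hnone; exists k.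
have IA : forall k, Inv f x d rho sigma (bracket f x d rho eta a0 k).1 (bracket f x d rho eta a0 k).2 /\
  (bracket f x d rho eta a0 k).2 - (bracket f x d rho eta a0 k).1 <= eta ^+ k * a0.
  by move=> k; exact: (inv_all hg hr hrs hs heta ha0 hna0 (fun j _ => hns j)).
have MS : forall k, (bracket f x d rho eta a0 k).1 <= (bracket f x d rho eta a0 k.+1).1 /\
  (bracket f x d rho eta a0 k.+1).2 <= (bracket f x d rho eta a0 k).2.
  by move=> k; exact: (mono_step hg hr hrs hs heta ha0 hna0 (fun j _ => hns j)).
apply: (final_contra (a1 := fun k => (bracket f x d rho eta a0 k).1)
   (a2 := fun k => (bracket f x d rho eta a0 k).2)
   (dphi := fun t => inner (grad f (x + t *: d)) d) (eta := eta) (a0 := a0)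
   (lo := sigma * inner (grad f x) d) (hi := rho * inner (grad f x) d)).
- by move=> k; have [[_ h _ _ _] _] := IA k.
- by move=> k; have [h _] := MS k.
- by move=> k; have [_ h] := MS k.
- by move=> k; have [_ h] := IA k.
- by clear - he1; lra.
- exact: he2.
- exact: ha0.
- by move=> k; have [[_ _ _ h _] _] := IA k.
- by move=> k; have [Ik _] := IA k; exact: (mvt_part hdf Ik).
- exact: dphi_cont.
- by clear - hg hrs hr; nra.
Qed.
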